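(* Let $(y_1,x_1),\dots,(y_\ell,x_\ell)\in\mathbb{R}^3\times\mathbb{R}^3$, $c_1^2,\dots,c_\ell^2\ge0$, $\hat\mu\in\mathbb{R}$, and let $\hat{\mathcal{D}}$ be an admissible dual matrix. Suppose that $$-\hat\mu\|z_0\|_2^2+2\sum_{i=1}^\ell z_i^\top[\hat{\mathcal{D}}]_{0i}z_i-\sum_{i=1}^\ell z_0^\top\big(2[\hat{\mathcal{D}}]_{0i}-Q_i+c_i^2I_4\big)z_i\ge0\quad\text{for all }z_0,\dots,z_\ell\in\mathbb{R}^4.$$ Then $[\hat{\mathcal{D}}]_{0i}\succeq0$ for every $i=1,\dots,\ell$. Moreover, if $c_i^2\ne\lambda_{\min}(Q_i)$ and $c_i^2\ne\lambda_{\max}(Q_i)$, then $[\hat{\mathcal{D}}]_{0i}\succ0$.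
   Context: For $w=[w_1;w_2;w_3;w_4]\in\mathbb{S}^3$, $R(w)=\begin{bmatrix} w_1^2+w_2^2-w_3^2-w_4^2 & 2(w_2w_3-w_1w_4) & 2(w_2w_4+w_1w_3)\\ 2(w_2w_3+w_1w_4) & w_1^2+w_3^2-w_2^2-w_4^2 & 2(w_3w_4-w_1w_2)\\ 2(w_2w_4-w_1w_3) & 2(w_3w_4+w_1w_2) & w_1^2+w_4^2-w_2^2-w_3^2\end{bmatrix}\in SO(3)$. $Q_i$ is the unique symmetric $4\times4$ matrix with $w^\top Q_iw=\|y_i-R(w)x_i\|_2^2$ for all $w\in\mathbb{S}^3$; $\lambda_{\min},\lambda_{\max}$ are its extreme eigenvalues. For $\mathcal{A}\in\mathbb{R}^{4(\ell+1)\times4(\ell+1)}$, $[\mathcal{A}]_{ij}$ ($0\le i,j\le\ell$) is the $4\times4$ block in rows $4i+1..4i+4$, columns $4j+1..4j+4$. An admissible dual matrix is a symmetric $\mathcal{D}\in\mathbb{R}^{4(\ell+1)\times4(\ell+1)}$ with $[\mathcal{D}]_{ii}+2[\mathcal{D}]_{0i}=0$ for $i=1,\dots,\ell$ and all blocks other than $[\mathcal{D}]_{ii},[\mathcal{D}]_{0i},[\mathcal{D}]_{i0}$ ($i\ge1$) equal to zero. *)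

(* Defs.v *)
From HB Require Import structures.
From mathcomp Require Import all_boot all_order all_algebra.
From mathcomp Require Import zify.
From mathcomp Require Import reals.

Set Implicit Arguments.
Unset Strict Implicit.
Unset Printing Implicit Defensive.

Import Order.TTheory GRing.Theory Num.Theory.
Local Open Scope ring_scope.

Lemma blk_idx_proof (l : nat) (i : 'I_l.+1) (a : 'I_4) : (4 * i + a < 4 * l.+1)%N.
Proof. have := ltn_ord i; have := ltn_ord a; lia. Qed.

Definition blk_idx (l : nat) (i : 'I_l.+1) (a : 'I_4) : 'I_(4 * l.+1) :=
  Ordinal (blk_idx_proof i a).

(* [A]_{ij} : the 4x4 block in rows 4i+1..4i+4, columns 4j+1..4j+4. *)
Definition blk {R : Type} (l : nat) (A : 'M[R]_(4 * l.+1)) (i j : 'I_l.+1) : 'M[R]_4 :=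
  \matrix_(a < 4, b < 4) A (blk_idx i a) (blk_idx j b).

Definition admissible {R : pzRingType} (l : nat) (D : 'M[R]_(4 * l.+1)) : Prop :=
  D^T = D /\
  (forall i : 'I_l.+1, i != ord0 -> blk D i i + 2%:R *: blk D ord0 i = 0) /\
  (forall i j : 'I_l.+1,
     ~ ((i == j) && (i != ord0) \/ (i == ord0) && (j != ord0) \/ (j == ord0) && (i != ord0)) ->
     blk D i j = 0).

Definition qf {R : pzRingType} (n : nat) (u : 'cV[R]_n) (A : 'M[R]_n) (v : 'cV[R]_n) : R :=
  (u^T *m A *m v) ord0 ord0.

Definition sqnorm {R : pzRingType} (n : nat) (v : 'cV[R]_n) : R :=
  \sum_(k < n) v k ord0 ^+ 2.

Definition rotq {R : pzRingType} (w : 'cV[R]_4) : 'M[R]_3 :=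
  let w1 := w 0%R ord0 in let w2 := w 1%R ord0 in
  let w3 := w 2%:R ord0 in let w4 := w 3%:R ord0 in
  \matrix_(i < 3, j < 3)
    match nat_of_ord i, nat_of_ord j with
    | 0, 0 => w1^+2 + w2^+2 - w3^+2 - w4^+2
    | 0, 1 => 2%:R * (w2 * w3 - w1 * w4)
    | 0, _ => 2%:R * (w2 * w4 + w1 * w3)
    | 1, 0 => 2%:R * (w2 * w3 + w1 * w4)
    | 1, 1 => w1^+2 + w3^+2 - w2^+2 - w4^+2
    | 1, _ => 2%:R * (w3 * w4 - w1 * w2)
    | _, 0 => 2%:R * (w2 * w4 - w1 * w3)
    | _, 1 => 2%:R * (w3 * w4 + w1 * w2)
    | _, _ => w1^+2 + w4^+2 - w2^+2 - w3^+2
    end.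

Definition psd {R : numDomainType} (n : nat) (A : 'M[R]_n) : Prop :=
  A^T = A /\ forall z : 'cV[R]_n, 0 <= qf z A z.

Definition pd {R : numDomainType} (n : nat) (A : 'M[R]_n) : Prop :=
  A^T = A /\ forall z : 'cV[R]_n, z != 0 -> 0 < qf z A z.

Definition is_lambda_min {R : realFieldType} (n : nat) (A : 'M[R]_n) (l : R) : Prop :=
  eigenvalue A l /\ forall m, eigenvalue A m -> l <= m.

Definition is_lambda_max {R : realFieldType} (n : nat) (A : 'M[R]_n) (l : R) : Prop :=
  eigenvalue A l /\ forall m, eigenvalue A m -> m <= l.

(* Main.v *)
Require Import Defs.
From HB Require Import structures.
From mathcomp Require Import all_boot all_order all_algebra.
From mathcomp Require Import reals ring lra.

Import Order.TTheory GRing.Theory Num.Theory.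
Local Open Scope ring_scope.

Lemma sum3 (R : pzRingType) (F : 'I_3 -> R) :
  \sum_(k < 3) F k = F (@Ordinal 3 0 isT) + F (@Ordinal 3 1 isT) + F (@Ordinal 3 2 isT).
Proof.
rewrite !big_ord_recl big_ord0 addr0 addrA; by congr (F _ + F _ + F _); apply: val_inj.
Qed.
Lemma sum4 (R : pzRingType) (F : 'I_4 -> R) :
  \sum_(k < 4) F k = F (@Ordinal 4 0 isT) + F (@Ordinal 4 1 isT) + F (@Ordinal 4 2 isT) + F (@Ordinal 4 3 isT).
Proof.
rewrite !big_ord_recl big_ord0 addr0 !addrA; by congr (F _ + F _ + F _ + F _); apply: val_inj.
Qed.
Definition col4 {R : pzRingType} (a b c d : R) : 'cV[R]_4 := \col_(k < 4) nth 0 [:: a; b; c; d] k.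

Notation O4 k := (@Ordinal 4 k isT).
Notation O3 k := (@Ordinal 3 k isT).

Lemma qf_sum {R : pzRingType} n (u : 'cV[R]_n) A v :
  qf u A v = \sum_(k < n) \sum_(j < n) u j ord0 * A j k * v k ord0.
Proof.
rewrite /qf !mxE; apply: eq_bigr => k _; rewrite !mxE big_distrl /=.
by apply: eq_bigr => j _; rewrite !mxE.
Qed.

Section Qform.
Variable R : realType.
Variables X Y : 'cV[R]_3.
Local Notation x0 := (X (O3 0) ord0).
Local Notation x1 := (X (O3 1) ord0).
Local Notation x2 := (X (O3 2) ord0).
Local Notation y0 := (Y (O3 0) ord0).
Local Notation y1 := (Y (O3 1) ord0).
Local Notation y2 := (Y (O3 2) ord0).

Definition Mm : 'M[R]_4 := \matrix_(j < 4, k < 4)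
  match nat_of_ord j, nat_of_ord k with
  | 0, 0 => y0*x0 + y1*x1 + y2*x2
  | 0, 1 | 1, 0 => y2*x1 - y1*x2
  | 0, 2 | 2, 0 => y0*x2 - y2*x0
  | 0, 3 | 3, 0 => y1*x0 - y0*x1
  | 1, 1 => y0*x0 - y1*x1 - y2*x2
  | 1, 2 | 2, 1 => y0*x1 + y1*x0
  | 1, 3 | 3, 1 => y0*x2 + y2*x0
  | 2, 2 => - y0*x0 + y1*x1 - y2*x2
  | 2, 3 | 3, 2 => y1*x2 + y2*x1
  | _, _ => - y0*x0 - y1*x1 + y2*x2
  end.

Definition ss : R := sqnorm X + sqnorm Y.
Definition pp : R := sqnorm X * sqnorm Y.

Lemma MmM : Mm *m Mm = pp%:M.
Proof.
apply/matrixP => j k; rewrite !mxE sum4 /pp /sqnorm !sum3.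
case: j => [[|[|[|[|//]]]] Hj]; case: k => [[|[|[|[|//]]]] Hk]; rewrite !mxE /=; ring.
Qed.

Variable Q : 'M[R]_4.
Hypothesis QT : Q^T = Q.
Hypothesis HQ : forall w : 'cV[R]_4, sqnorm w = 1 -> qf w Q w = sqnorm (Y - rotq w *m X).

Lemma Hc a b c d : a^+2 + b^+2 + c^+2 + d^+2 = 1 ->
  qf (col4 a b c d) Q (col4 a b c d) = sqnorm (Y - rotq (col4 a b c d) *m X).
Proof. move=> h; apply: HQ; by rewrite /sqnorm sum4 !mxE /=. Qed.

Lemma Qsym j k : Q k j = Q j k.
Proof. by rewrite -{1}QT mxE. Qed.

Definition rq (a b c d : R) (i j : nat) : R :=
    match i, j with
    | 0, 0 => a^+2 + b^+2 - c^+2 - d^+2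
    | 0, 1 => 2%:R * (b * c - a * d)
    | 0, _ => 2%:R * (b * d + a * c)
    | 1, 0 => 2%:R * (b * c + a * d)
    | 1, 1 => a^+2 + c^+2 - b^+2 - d^+2
    | 1, _ => 2%:R * (c * d - a * b)
    | _, 0 => 2%:R * (b * d - a * c)
    | _, 1 => 2%:R * (c * d + a * b)
    | _, _ => a^+2 + d^+2 - b^+2 - c^+2
    end.
Definition Fp a b c d : R :=
  (y0 - (rq a b c d 0 0 * x0 + rq a b c d 0 1 * x1 + rq a b c d 0 2 * x2))^+2 +
  (y1 - (rq a b c d 1 0 * x0 + rq a b c d 1 1 * x1 + rq a b c d 1 2 * x2))^+2 +
  (y2 - (rq a b c d 2 0 * x0 + rq a b c d 2 1 * x1 + rq a b c d 2 2 * x2))^+2.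
Lemma f_col4 a b c d : sqnorm (Y - rotq (col4 a b c d) *m X) = Fp a b c d.
Proof. rewrite /sqnorm !sum3 !mxE !sum3 !mxE /=. rewrite /Fp /rq. ring. Qed.
Lemma qf_col4 (A : 'M[R]_4) a b c d : qf (col4 a b c d) A (col4 a b c d) =
  a * A (O4 0) (O4 0) * a + a * A (O4 0) (O4 1) * b + a * A (O4 0) (O4 2) * c + a * A (O4 0) (O4 3) * d + b * A (O4 1) (O4 0) * a + b * A (O4 1) (O4 1) * b + b * A (O4 1) (O4 2) * c + b * A (O4 1) (O4 3) * d + c * A (O4 2) (O4 0) * a + c * A (O4 2) (O4 1) * b + c * A (O4 2) (O4 2) * c + c * A (O4 2) (O4 3) * d + d * A (O4 3) (O4 0) * a + d * A (O4 3) (O4 1) * b + d * A (O4 3) (O4 2) * c + d * A (O4 3) (O4 3) * d.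
Proof. rewrite qf_sum !sum4 !mxE /=; ring. Qed.
Lemma sqX : sqnorm X = x0^+2 + x1^+2 + x2^+2.
Proof. by rewrite /sqnorm sum3. Qed.
Lemma sqY : sqnorm Y = y0^+2 + y1^+2 + y2^+2.
Proof. by rewrite /sqnorm sum3. Qed.

Lemma Q00 : Q (O4 0) (O4 0) = ss - 2%:R * (y0*x0 + y1*x1 + y2*x2).
Proof.
have := Hc 1 0 0 0 ltac:(field).
rewrite qf_col4 f_col4 /ss sqX sqY /Fp /rq; lra.
Qed.
Lemma Q01 : Q (O4 0) (O4 1) = - 2%:R * (y2*x1 - y1*x2).
Proof.
have := Hc (3/5) (4/5) 0 0 ltac:(field).
have := Hc (3/5) (-(4/5)) 0 0 ltac:(field).
have := Qsym (O4 0) (O4 1).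
rewrite !qf_col4 !f_col4 /Fp /rq; lra.
Qed.
Lemma Q02 : Q (O4 0) (O4 2) = - 2%:R * (y0*x2 - y2*x0).
Proof.
have := Hc (3/5) 0 (4/5) 0 ltac:(field).
have := Hc (3/5) 0 (-(4/5)) 0 ltac:(field).
have := Qsym (O4 0) (O4 2).
rewrite !qf_col4 !f_col4 /Fp /rq; lra.
Qed.
Lemma Q03 : Q (O4 0) (O4 3) = - 2%:R * (y1*x0 - y0*x1).
Proof.
have := Hc (3/5) 0 0 (4/5) ltac:(field).
have := Hc (3/5) 0 0 (-(4/5)) ltac:(field).
have := Qsym (O4 0) (O4 3).
rewrite !qf_col4 !f_col4 /Fp /rq; lra.
Qed.
Lemma Q11 : Q (O4 1) (O4 1) = ss - 2%:R * (y0*x0 - y1*x1 - y2*x2).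
Proof.
have := Hc 0 1 0 0 ltac:(field).
rewrite qf_col4 f_col4 /ss sqX sqY /Fp /rq; lra.
Qed.
Lemma Q12 : Q (O4 1) (O4 2) = - 2%:R * (y0*x1 + y1*x0).
Proof.
have := Hc 0 (3/5) (4/5) 0 ltac:(field).
have := Hc 0 (3/5) (-(4/5)) 0 ltac:(field).
have := Qsym (O4 1) (O4 2).
rewrite !qf_col4 !f_col4 /Fp /rq; lra.
Qed.
Lemma Q13 : Q (O4 1) (O4 3) = - 2%:R * (y0*x2 + y2*x0).
Proof.
have := Hc 0 (3/5) 0 (4/5) ltac:(field).
have := Hc 0 (3/5) 0 (-(4/5)) ltac:(field).
have := Qsym (O4 1) (O4 3).
rewrite !qf_col4 !f_col4 /Fp /rq; lra.
Qed.
Lemma Q22 : Q (O4 2) (O4 2) = ss - 2%:R * (- y0*x0 + y1*x1 - y2*x2).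
Proof.
have := Hc 0 0 1 0 ltac:(field).
rewrite qf_col4 f_col4 /ss sqX sqY /Fp /rq; lra.
Qed.
Lemma Q23 : Q (O4 2) (O4 3) = - 2%:R * (y1*x2 + y2*x1).
Proof.
have := Hc 0 0 (3/5) (4/5) ltac:(field).
have := Hc 0 0 (3/5) (-(4/5)) ltac:(field).
have := Qsym (O4 2) (O4 3).
rewrite !qf_col4 !f_col4 /Fp /rq; lra.
Qed.
Lemma Q33 : Q (O4 3) (O4 3) = ss - 2%:R * (- y0*x0 - y1*x1 + y2*x2).
Proof.
have := Hc 0 0 0 1 ltac:(field).
rewrite qf_col4 f_col4 /ss sqX sqY /Fp /rq; lra.
Qed.
Lemma QE : Q = ss%:M - 2%:R *: Mm.
Proof.
apply/matrixP => j k.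
case: j => [[|[|[|[|//]]]] Hj]; case: k => [[|[|[|[|//]]]] Hk];
  rewrite (bool_irrelevance Hj isT) (bool_irrelevance Hk isT) ?(Qsym (O4 0) (O4 1)) ?(Qsym (O4 0) (O4 2)) ?(Qsym (O4 0) (O4 3)) ?(Qsym (O4 1) (O4 2)) ?(Qsym (O4 1) (O4 3)) ?(Qsym (O4 2) (O4 3)) ?Q00 ?Q01 ?Q02 ?Q03 ?Q11 ?Q12 ?Q13 ?Q22 ?Q23 ?Q33 !mxE /=; ring.
Qed.

Lemma eigQ (r : 'rV[R]_4) m : r != 0 -> r *m Q = m *: r -> (ss - m) ^+ 2 = 4%:R * pp.
Proof.
move=> r0 hr.
have h1 : r *m Mm = ((ss - m) / 2%:R) *: r.
  move: hr; rewrite QE mulmxBr mul_mx_scalar -scalemxAr => hr.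
  have -> : r *m Mm = 2%:R^-1 *: (ss *: r - (ss *: r - 2%:R *: (r *m Mm))).
    by rewrite opprB addrC subrK scalerA mulVf ?scale1r // pnatr_eq0.
  by rewrite hr -scalerBl scalerA mulrC.
have h2 : r *m Mm *m Mm = pp *: r by rewrite -mulmxA MmM mul_mx_scalar.
move: h2; rewrite h1 -scalemxAl h1 scalerA => /eqP.
rewrite -subr_eq0 -scalerBl scalemx_eq0 (negbTE r0) orbF subr_eq0 => /eqP h.
have -> : (ss - m) ^+ 2 = 4%:R * (((ss - m) / 2%:R) * ((ss - m) / 2%:R)) by field.
by rewrite h.
Qed.
End Qform.

Section QF.
Variable R : realType.
Implicit Types (u v w : 'cV[R]_4) (A : 'M[R]_4).

Lemma qfE u A v : qf u A v = (u^T *m A *m v) ord0 ord0. Proof. by []. Qed.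
Lemma qfDl u w A v : qf (u + w) A v = qf u A v + qf w A v.
Proof. by rewrite !qfE linearD /= !mulmxDl mxE. Qed.
Lemma qfDr u A v w : qf u A (v + w) = qf u A v + qf u A w.
Proof. by rewrite !qfE mulmxDr mxE. Qed.
Lemma qfZl t u A v : qf (t *: u) A v = t * qf u A v.
Proof. by rewrite !qfE linearZ /= -!scalemxAl mxE. Qed.
Lemma qfZr t u A v : qf u A (t *: v) = t * qf u A v.
Proof. by rewrite !qfE -scalemxAr mxE. Qed.
Lemma qf0l A v : qf 0 A v = 0.
Proof. by rewrite -(scale0r 0) qfZl mul0r. Qed.
Lemma qf0r u A : qf u A 0 = 0.
Proof. by rewrite -(scale0r 0) qfZr mul0r. Qed.
Lemma qf_sym u A v : A^T = A -> qf u A v = qf v A u.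
Proof.
move=> AT; rewrite !qfE.
rewrite -[in RHS](trmxK (v^T *m A *m u)). rewrite [in RHS]mxE.
by rewrite !trmx_mul trmxK AT mulmxA.
Qed.
Lemma qf_delta k A v : qf (delta_mx k ord0) A v = (A *m v) k ord0.
Proof.
by rewrite qfE trmx_delta -mulmxA -rowE mxE.
Qed.

Lemma quad0 (a g : R) : (forall t, 0 <= a * t ^+ 2 + g * t) -> g = 0.
Proof.
move=> H; set K := `|a| + 1.
have K0 : 0 < K by rewrite /K ltr_pwDr // normr_ge0.
have := H (- g / K).
have aK : a * (g / K) ^+ 2 <= (K - 1) * (g / K) ^+ 2.
  by rewrite ler_wpM2r ?sqr_ge0 // /K addrK ler_norm.
have -> : a * (- g / K) ^+ 2 = a * (g / K) ^+ 2 by rewrite mulNr sqrrN.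
have -> : g * (- g / K) = - K * (g / K) ^+ 2 by field; rewrite gt_eqF.
move=> h; have : (g / K) ^+ 2 <= 0 by nra.
rewrite (@le_eqVlt _ _ _ 0) ltNge sqr_ge0 orbF sqrf_eq0 mulf_eq0 invr_eq0.
by rewrite (gt_eqF K0) orbF => /eqP.
Qed.

Lemma psd_ker A v : A^T = A -> (forall z, 0 <= qf z A z) -> qf v A v = 0 -> A *m v = 0.
Proof.
move=> AT H q0; apply/matrixP => k j; rewrite (ord1 j) -qf_delta mxE.
suff : 2%:R * qf (delta_mx k ord0) A v = 0 by lra.
apply: (@quad0 (qf (delta_mx k ord0) A (delta_mx k ord0)) (2%:R * qf (delta_mx k ord0) A v)) => t.
have := H (v + t *: delta_mx k ord0).
rewrite !qfDl !qfDr !qfZl !qfZr q0 (qf_sym v A (delta_mx _ _) AT).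
move=> h; nra.
Qed.

Lemma qf_zero_ker A v : (forall u, qf u A v = 0) -> A *m v = 0.
Proof. by move=> H; apply/matrixP => k j; rewrite (ord1 j) -qf_delta mxE H. Qed.
End QF.

Theorem lemmaB2 (R : realType) (l : nat)
  (y x : 'I_l -> 'cV[R]_3) (c2 : 'I_l -> R) (Q : 'I_l -> 'M[R]_4)
  (mu : R) (D : 'M[R]_(4 * l.+1)) :
  (forall i, 0 <= c2 i) ->
  (forall i, (Q i)^T = Q i) ->
  (forall i (w : 'cV[R]_4), sqnorm w = 1 ->
     qf w (Q i) w = sqnorm (y i - rotq w *m x i)) ->
  admissible D ->
  (forall z : 'I_l.+1 -> 'cV[R]_4,
     0 <= - mu * sqnorm (z ord0)
          + 2%:R * (\sum_(i < l) qf (z (lift ord0 i)) (blk D ord0 (lift ord0 i)) (z (lift ord0 i)))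
          - \sum_(i < l) qf (z ord0)
               (2%:R *: blk D ord0 (lift ord0 i) - Q i + c2 i *: 1%:M) (z (lift ord0 i))) ->
  (forall i : 'I_l, psd (blk D ord0 (lift ord0 i))) /\
  (forall i : 'I_l,
     (forall lm, is_lambda_min (Q i) lm -> c2 i != lm) ->
     (forall lM, is_lambda_max (Q i) lM -> c2 i != lM) ->
     pd (blk D ord0 (lift ord0 i))).
Proof.
Proof.
move=> hc hQs hQ [DT [Hdiag Hz]] H.
have blkT : forall i j, (blk D i j)^T = blk D j i.
  by move=> i j; apply/matrixP => a b; rewrite !mxE -{1}DT mxE.
have L : forall j : 'I_l, (lift ord0 j == ord0 :> 'I_l.+1) = false.
  by move=> j; rewrite eq_sym; apply/negbTE/neq_lift.
have BT : forall i : 'I_l, (blk D ord0 (lift ord0 i))^T = blk D ord0 (lift ord0 i).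
  move=> i; have h := Hdiag (lift ord0 i) (negbT (L i)).
  have h2 : 2%:R *: blk D ord0 (lift ord0 i) = - blk D (lift ord0 i) (lift ord0 i).
    by apply/eqP; rewrite -addr_eq0 addrC h.
  have -> : blk D ord0 (lift ord0 i) = - 2%:R^-1 *: blk D (lift ord0 i) (lift ord0 i).
    by rewrite scaleNr -scalerN -h2 scalerA mulVf ?scale1r // pnatr_eq0.
  by rewrite linearZ /= blkT.
have Hzi : forall (i : 'I_l) u v, 0 <= - mu * sqnorm u
      + 2%:R * qf v (blk D ord0 (lift ord0 i)) v
      - qf u (2%:R *: blk D ord0 (lift ord0 i) - Q i + c2 i *: 1%:M) v.
  move=> i u v.
  have := H (fun k => if k == ord0 then u else if k == lift ord0 i then v else 0).
  rewrite /= ?eqxx.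
  rewrite (bigD1 i) //= eqxx big1 ?addr0; last first.
    by move=> j ji; rewrite (inj_eq (@lift_inj _ ord0)) (negbTE ji) qf0l.
  rewrite (bigD1 i) //= eqxx big1 ?addr0 //.
  by move=> j ji; rewrite (inj_eq (@lift_inj _ ord0)) (negbTE ji) qf0r.
have sq0 : sqnorm (0 : 'cV[R]_4) = 0.
  by rewrite /sqnorm big1 // => k _; rewrite mxE expr0n.
have sqZ : forall t (u : 'cV[R]_4), sqnorm (t *: u) = t ^+ 2 * sqnorm u.
  by move=> t u; rewrite /sqnorm mulr_sumr; apply: eq_bigr => k _; rewrite mxE exprMn.
have psdB : forall i : 'I_l, forall z, 0 <= qf z (blk D ord0 (lift ord0 i)) z.
  move=> i z; have := Hzi i 0 z; rewrite sq0 qf0l; lra.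
split; first by move=> i; split; [exact: BT | exact: psdB].
move=> i hmin hmax; split; first exact: BT.
move=> v v0.
case: (ltP 0 (qf v (blk D ord0 (lift ord0 i)) v)) => // hle.
have q0 : qf v (blk D ord0 (lift ord0 i)) v = 0 by apply/le_anti; rewrite hle psdB.
exfalso.
have Bv := @psd_ker _ _ _ (BT i) (psdB i) q0.
have Mv : (2%:R *: blk D ord0 (lift ord0 i) - Q i + c2 i *: 1%:M) *m v = 0.
  apply: qf_zero_ker => u.
  suff : - qf u (2%:R *: blk D ord0 (lift ord0 i) - Q i + c2 i *: 1%:M) v = 0 by lra.
  apply: (@quad0 _ (- mu * sqnorm u)) => t.
  have := Hzi i (t *: u) v; rewrite sqZ qfZl q0; lra.
have Qv : Q i *m v = c2 i *: v.
  move: Mv; rewrite mulmxDl mulmxBl -!scalemxAl Bv mul1mx scaler0 add0r.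
  by move/eqP; rewrite addrC subr_eq0 => /eqP <-.
set r := v^T.
have r0 : r != 0.
  by apply/negP => /eqP h; move/negP: v0; apply; rewrite -[v]trmxK -/r h trmx0.
have hr : r *m Q i = c2 i *: r by rewrite /r -{1}(hQs i) -trmx_mul Qv linearZ.
have eig := @eigQ _ (x i) (y i) (Q i) (hQs i) (hQ i).
have e1 := eig r (c2 i) r0 hr.
case: (lerP (c2 i) (ss R (x i) (y i))) => hcs.
- suff Hm : is_lambda_min (Q i) (c2 i) by move: (hmin _ Hm); rewrite eqxx.
  split; first by apply/eigenvalueP; exists r.
  move=> m /eigenvalueP [r' hr' r'0]; have := eig r' m r'0 hr'; nra.
- suff Hm : is_lambda_max (Q i) (c2 i) by move: (hmax _ Hm); rewrite eqxx.
  split; first by apply/eigenvalueP; exists r.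
  move=> m /eigenvalueP [r' hr' r'0]; have := eig r' m r'0 hr'; nra.
Qed.
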